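(* Let $k\ge 1$ and let $v_0,\pi_1,v_1,\dots,\pi_k$ be generated by Approximate Value Iteration with errors $\epsilon_1,\dots,\epsilon_{k-1}$, and $\epsilon=\max_{1\le j<k}\operatorname{span}(\epsilon_j)$ (with $\epsilon=0$ if $k=1$). Let $\pi_{k,k}$ be the periodic non-stationary policy $\pi_k\,\pi_{k-1}\cdots\pi_1\,\pi_k\,\pi_{k-1}\cdots\pi_1\cdots$. Then $$\|v_*-v_{\pi_{k,k}}\|_\infty \le \left(\frac{\gamma}{1-\gamma}-\frac{\gamma^k}{1-\gamma^k}\right)\epsilon+\frac{\gamma^k}{1-\gamma^k}\operatorname{span}(v_*-v_0).$$
   Context: A Markov Decision Process with finite state space $S$, finite action space $A$, reward function $r(s,a)$, transition probabilities $p(s'|s,a)$ and discount factor $\gamma\in[0,1)$. For a (deterministic, stationary) policy $\pi:S\to A$, let $r_\pi(s)=r(s,\pi(s))$, let $P_\pi$ be the stochastic matrix $P_\pi(s,s')=p(s'|s,\pi(s))$, and let $T_\pi v=r_\pi+\gamma P_\pi v$ be the Bellman operator of $\pi$; $v_\pi$ is its unique fixed point. The Bellman optimality operator is $Tv=\max_\pi T_\pi v$ (componentwise), $v_*$ is its fixed point (the optimal value), and a policy $\pi$ is greedy with respect to $v$ if $T_\pi v=Tv$. For $f:S\to\mathbb R$, $\operatorname{span}(f)=\max_s f(s)-\min_s f(s)$. Approximate Value Iteration: from arbitrary $v_0$, for $j\ge0$ pick any $\pi_{j+1}$ greedy w.r.t. $v_j$ and set $v_{j+1}=T_{\pi_{j+1}}v_j+\epsilon_{j+1}$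 with arbitrary errors $\epsilon_{j+1}:S\to\mathbb R$. A non-stationary policy $\sigma_0\sigma_1\cdots$ uses $\sigma_t$ at time $t$, with value $\sum_{t\ge0}\gamma^t P_{\sigma_0}\cdots P_{\sigma_{t-1}}r_{\sigma_t}$. *)

(* Defs.v *)
From Stdlib Require Import Reals.
From mathcomp Require Import all_boot.
Set Implicit Arguments.
Unset Strict Implicit.
Unset Printing Implicit Defensive.
Open Scope R_scope.

Section MDP.
Variables (S A : finType).

Definition policy := S -> A.

Definition sumS (f : S -> R) : R := \big[Rplus/0]_(s : S) f s.

(* Transition kernel p s' s a = p(s'|s,a) is a stochastic kernel. *)
Definition stochastic (p : S -> S -> A -> R) : Prop :=
  (forall s' s a, 0 <= p s' s a) /\ (forall s a, sumS (fun s' => p s' s a) = 1).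

Definition rpol (r : S -> A -> R) (pi : policy) : S -> R := fun s => r s (pi s).

Definition Pmat (p : S -> S -> A -> R) (pi : policy) (f : S -> R) : S -> R :=
  fun s => sumS (fun s' => p s' s (pi s) * f s').

Definition Tpol (r : S -> A -> R) (p : S -> S -> A -> R) (gamma : R)
  (pi : policy) (v : S -> R) : S -> R :=
  fun s => rpol r pi s + gamma * Pmat p pi v s.

Definition greedy r p gamma (pi : policy) (v : S -> R) : Prop :=
  forall pi' s, Tpol r p gamma pi' v s <= Tpol r p gamma pi v s.

(* v is a fixed point of the Bellman optimality operator T v = max_pi T_pi v
   (componentwise maximum over policies). *)
Definition optimal_value r p gamma (v : S -> R) : Prop :=
  (forall pi s, Tpol r p gamma pi v s <= v s) /\
  (forall s, exists pi, Tpol r p gamma pi v s = v s).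

(* span f = max_s f s - min_s f s, written as max_{s,t} (f s - f t)
   (this also gives 0 for an empty state space). *)
Definition span (f : S -> R) : R :=
  \big[Rmax/0]_(s : S) \big[Rmax/0]_(t : S) (f s - f t).

Definition supnorm (f : S -> R) : R := \big[Rmax/0]_(s : S) Rabs (f s).

Fixpoint compP (p : S -> S -> A -> R) (sigma : nat -> policy) (t : nat) (f : S -> R)
  : S -> R :=
  match t with
  | 0%N => f
  | t'.+1 => Pmat p (sigma 0%N) (compP p (fun i => sigma (i.+1)) t' f)
  end.

Definition nonstat_value r p gamma (sigma : nat -> policy) (w : S -> R) : Prop :=
  forall s, infinite_sum
              (fun t => gamma ^ t * compP p sigma t (rpol r (sigma t)) s) (w s).

End MDP.

Definition periodic_policy (S A : finType) (pi : nat -> policy S A) (k : nat)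
  : nat -> policy S A := fun t => pi (k - t %% k)%N.

Definition max_err_span (S : finType) (eps : nat -> S -> R) (k : nat) : R :=
  \big[Rmax/0]_(1 <= j < k) span (eps j).

(* Main.v *)
Require Import Defs.
From Stdlib Require Import Reals Lra Lia FunctionalExtensionality.
From mathcomp Require Import all_boot.
From mathcomp Require Import zify.
Open Scope R_scope.
Set Implicit Arguments.
Unset Strict Implicit.

Lemma bigRplus_sub (I : Type) (l : seq I) (F G : I -> R) :
  \big[Rplus/0]_(i <- l) F i - \big[Rplus/0]_(i <- l) G i =
  \big[Rplus/0]_(i <- l) (F i - G i).
Proof. elim: l => [|a l IH]; rewrite ?big_nil ?big_cons /=; lra. Qed.

Lemma bigRplus_add (I : Type) (l : seq I) (F G : I -> R) :
  \big[Rplus/0]_(i <- l) F i + \big[Rplus/0]_(i <- l) G i =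
  \big[Rplus/0]_(i <- l) (F i + G i).
Proof. elim: l => [|a l IH]; rewrite ?big_nil ?big_cons /=; lra. Qed.

Lemma bigRplus_scal (I : Type) (l : seq I) (F : I -> R) c :
  c * \big[Rplus/0]_(i <- l) F i = \big[Rplus/0]_(i <- l) (c * F i).
Proof. elim: l => [|a l IH]; rewrite ?big_nil ?big_cons /=; nra. Qed.

Lemma bigRplus_le (I : Type) (l : seq I) (F G : I -> R) :
  (forall i, F i <= G i) ->
  \big[Rplus/0]_(i <- l) F i <= \big[Rplus/0]_(i <- l) G i.
Proof. move=> H; elim: l => [|a l IH]; rewrite ?big_nil ?big_cons /=; [lra|]. have := H a; lra. Qed.

Lemma bigRmax_ge (I : eqType) (l : seq I) (F : I -> R) c x :
  x \in l -> F x <= \big[Rmax/c]_(i <- l) F i.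
Proof.
elim: l => [|a l IH] //; rewrite in_cons big_cons /=.
case/orP => [/eqP -> | Hx]; first by apply Rmax_l.
apply: Rle_trans (IH Hx) _; apply Rmax_r.
Qed.

Lemma bigRmax_ge0 (I : Type) (l : seq I) (F : I -> R) c :
  c <= \big[Rmax/c]_(i <- l) F i.
Proof.
elim: l => [|a l IH]; rewrite ?big_nil ?big_cons /=; first lra.
apply: Rle_trans IH _; apply Rmax_r.
Qed.

Lemma bigRmax_le (I : Type) (l : seq I) (P : pred I) (F : I -> R) c X :
  c <= X -> (forall i, F i <= X) -> \big[Rmax/c]_(i <- l | P i) F i <= X.
Proof.
move=> Hc H; elim: l => [|a l IH]; rewrite ?big_nil ?big_cons //=.
case: (P a) => //; by apply Rmax_lub.
Qed.

Lemma argmax_ex (S : finType) (f : S -> R) (s0 : S) :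
  exists t, forall s, f s <= f t.
Proof.
suff [t Ht] : exists t, forall s, s \in index_enum S -> f s <= f t.
  by exists t => s; apply Ht; rewrite mem_index_enum.
elim: (index_enum S) => [|a l [t Ht]]; first by exists s0.
case: (Rle_dec (f a) (f t)) => H.
- exists t => s; rewrite in_cons; case/orP => [/eqP -> //|]; exact: Ht.
- exists a => s; rewrite in_cons; case/orP => [/eqP -> |Hs]; first lra.
  have := Ht s Hs; lra.
Qed.

Lemma span_ge (S : finType) (f : S -> R) s t : f s - f t <= span f.
Proof.
rewrite /span.
have H1 := bigRmax_ge (fun t => f s - f t) 0 (mem_index_enum t).
have H2 := bigRmax_ge (fun s => \big[Rmax/0]_(t <- index_enum S) (f s - f t)) 0 (mem_index_enum s).
simpl in H1, H2; exact: Rle_trans H1 H2.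
Qed.

Lemma span_ge0 (S : finType) (f : S -> R) : 0 <= span f.
Proof. exact: bigRmax_ge0. Qed.

Lemma Pmat_sub (S A : finType) (p : S -> S -> A -> R) pi f g s :
  Pmat p pi f s - Pmat p pi g s = Pmat p pi (fun x => f x - g x) s.
Proof.
rewrite /Pmat /sumS bigRplus_sub; apply: eq_bigr => i _; ring.
Qed.

Lemma Pmat_ub (S A : finType) (p : S -> S -> A -> R) pi f c s :
  stochastic p -> (forall x, f x <= c) -> Pmat p pi f s <= c.
Proof.
move=> [Hp1 Hp2] Hf; rewrite /Pmat.
have -> : c = sumS (fun s' => p s' s (pi s) * c).
  transitivity (c * sumS (fun s' => p s' s (pi s))); first by rewrite Hp2; ring.
  by rewrite /sumS bigRplus_scal; apply: eq_bigr => i _; ring.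
apply: bigRplus_le => i; apply: Rmult_le_compat_l; [apply Hp1|apply Hf].
Qed.

Lemma Pmat_lb (S A : finType) (p : S -> S -> A -> R) pi f c s :
  stochastic p -> (forall x, c <= f x) -> c <= Pmat p pi f s.
Proof.
move=> [Hp1 Hp2] Hf; rewrite /Pmat.
have -> : c = sumS (fun s' => p s' s (pi s) * c).
  transitivity (c * sumS (fun s' => p s' s (pi s))); first by rewrite Hp2; ring.
  by rewrite /sumS bigRplus_scal; apply: eq_bigr => i _; ring.
apply: bigRplus_le => i; apply: Rmult_le_compat_l; [apply Hp1|apply Hf].
Qed.

Lemma Tpol_sub (S A : finType) r (p : S -> S -> A -> R) gamma pi f g s :
  Tpol r p gamma pi f s - Tpol r p gamma pi g s =
  gamma * Pmat p pi (fun x => f x - g x) s.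
Proof. rewrite /Tpol -Pmat_sub; ring. Qed.

Fixpoint Tcomp (S A : finType) (r : S -> A -> R) (p : S -> S -> A -> R) (gamma : R)
  (sigma : nat -> policy S A) (N : nat) (f : S -> R) : S -> R :=
  match N with
  | 0%N => f
  | N'.+1 => Tpol r p gamma (sigma 0%N) (Tcomp r p gamma (fun i => sigma i.+1) N' f)
  end.

Fixpoint Uit (S A : finType) (r : S -> A -> R) (p : S -> S -> A -> R) (gamma : R)
  (pi : nat -> policy S A) (j : nat) (f : S -> R) : S -> R :=
  match j with
  | 0%N => f
  | j'.+1 => Tpol r p gamma (pi j'.+1) (Uit r p gamma pi j' f)
  end.

Lemma Pmat_add (S A : finType) (p : S -> S -> A -> R) pi f g s :
  Pmat p pi (fun x => f x + g x) s = Pmat p pi f s + Pmat p pi g s.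
Proof. rewrite /Pmat /sumS bigRplus_add; apply: eq_bigr => i _; ring. Qed.

Lemma Pmat_scal (S A : finType) (p : S -> S -> A -> R) pi f c s :
  Pmat p pi (fun x => c * f x) s = c * Pmat p pi f s.
Proof. rewrite /Pmat /sumS bigRplus_scal; apply: eq_bigr => i _; ring. Qed.

Lemma Pmat_sum (S A : finType) (p : S -> S -> A -> R) pi (G : nat -> S -> R) N s :
  Pmat p pi (fun x => sum_f_R0 (fun t => G t x) N) s =
  sum_f_R0 (fun t => Pmat p pi (G t) s) N.
Proof.
elim: N => [|N IH] //=.
by rewrite (Pmat_add p pi (fun x => sum_f_R0 (fun t => G t x) N) (G N.+1)) IH.
Qed.

Lemma Tcomp_series (S A : finType) r (p : S -> S -> A -> R) gamma N :
  forall sigma f s,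
  Tcomp r p gamma sigma N.+1 f s =
  sum_f_R0 (fun t => gamma ^ t * compP p sigma t (rpol r (sigma t)) s) N
  + gamma ^ N.+1 * compP p sigma N.+1 f s.
Proof.
elim: N => [|N IH] sigma f s.
  rewrite /= /Tpol /=; ring.
change (Tcomp r p gamma sigma N.+2 f s) with (Tpol r p gamma (sigma 0%N) (Tcomp r p gamma (fun i => sigma i.+1) N.+1 f) s); rewrite /Tpol.
have -> : Tcomp r p gamma (fun i => sigma i.+1) N.+1 f =
  (fun x => sum_f_R0 (fun t => gamma ^ t * compP p (fun i => sigma i.+1) t
               (rpol r (sigma t.+1)) x) N
   + gamma ^ N.+1 * compP p (fun i => sigma i.+1) N.+1 f x).
  by apply: functional_extensionality => x; rewrite IH.
rewrite Pmat_add Pmat_scal Pmat_sum.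
rewrite (decomp_sum _ N.+1); last lia.
rewrite /= Rmult_plus_distr_l.
have -> : gamma * sum_f_R0 (fun t => Pmat p (sigma 0%N)
      (fun x => gamma ^ t * compP p (fun i => sigma i.+1) t (rpol r (sigma t.+1)) x) s) N
   = sum_f_R0 (fun i => gamma * gamma ^ i *
        Pmat p (sigma 0%N) (compP p (fun i0 => sigma i0.+1) i (rpol r (sigma i.+1))) s) N.
  rewrite scal_sum; apply: PartSum.sum_eq => i _.
  rewrite Pmat_scal; ring.
simpl; ring.
Qed.

Lemma abs_between x K : Rabs x <= K -> -K <= x <= K.
Proof. split_Rabs; lra. Qed.

Lemma Tcomp_ext (S A : finType) r (p : S -> S -> A -> R) gamma N f :
  forall sigma sigma', (forall t, (t < N)%N -> sigma t = sigma' t) ->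
  Tcomp r p gamma sigma N f = Tcomp r p gamma sigma' N f.
Proof.
elim: N => [|N IH] sigma sigma' H //=.
rewrite (H 0%N) // (IH (fun i => sigma i.+1) (fun i => sigma' i.+1)) // => t Ht.
exact: H.
Qed.

Lemma Tcomp_add (S A : finType) r (p : S -> S -> A -> R) gamma a b f :
  forall sigma,
  Tcomp r p gamma sigma (a + b) f =
  Tcomp r p gamma sigma a (Tcomp r p gamma (fun i => sigma (i + a)%N) b f).
Proof.
elim: a => [|a IH] sigma.
  rewrite add0n /=; congr Tcomp; apply: functional_extensionality => i; by rewrite addn0.
rewrite addSn /= IH; congr Tpol; congr Tcomp; congr Tcomp.
apply: functional_extensionality => i; by rewrite addnS.
Qed.

Lemma Tcomp_U (S A : finType) r (p : S -> S -> A -> R) gamma (pi : nat -> policy S A) j f :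
  Tcomp r p gamma (fun t => pi (j - t)%N) j f = Uit r p gamma pi j f.
Proof.
elim: j => [|j IH] //=.
rewrite subn0 -IH; congr Tpol.
Qed.

Lemma Tcomp_periodic (S A : finType) r (p : S -> S -> A -> R) gamma (pi : nat -> policy S A) k f :
  Tcomp r p gamma (periodic_policy pi k) k f = Uit r p gamma pi k f.
Proof.
rewrite -Tcomp_U; apply: Tcomp_ext => t Ht.
by rewrite /periodic_policy modn_small.
Qed.

Lemma periodic_shift (S A : finType) (pi : nat -> policy S A) k :
  (fun i => periodic_policy pi k (i + k)%N) = periodic_policy pi k.
Proof. apply: functional_extensionality => i; by rewrite /periodic_policy modnDr. Qed.

Lemma compP_bound (S A : finType) (p : S -> S -> A -> R) f K (hp : stochastic p) N :
  (forall x, Rabs (f x) <= K) ->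
  forall sigma s, Rabs (compP p sigma N f s) <= K.
Proof.
move=> Hf; elim: N => [|N IH] sigma s //=.
apply: Rabs_le; split.
- apply: Pmat_lb => // x; have := IH (fun i => sigma i.+1) x.
  move/abs_between => /=; lra.
- apply: Pmat_ub => // x; have := IH (fun i => sigma i.+1) x.
  move/abs_between => /=; lra.
Qed.

Lemma Uit_mono (S A : finType) r (p : S -> S -> A -> R) gamma (pi : nat -> policy S A)
  (hp : stochastic p) (hg0 : 0 <= gamma) j :
  forall f g c, (forall x, 0 <= f x - g x <= c) ->
  forall s, 0 <= Uit r p gamma pi j f s - Uit r p gamma pi j g s <= gamma ^ j * c.
Proof.
elim: j => [|j IH] f g c H s; first by rewrite /= Rmult_1_l; apply: H.
rewrite /= Tpol_sub.
have H1 : 0 <= Pmat p (pi j.+1) (fun x => Uit r p gamma pi j f x - Uit r p gamma pi j g x) s.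
  by apply: Pmat_lb => // x; case: (IH f g c H x).
have H2 : Pmat p (pi j.+1) (fun x => Uit r p gamma pi j f x - Uit r p gamma pi j g x) s
   <= gamma ^ j * c.
  by apply: Pmat_ub => // x; case: (IH f g c H x).
split; first by apply: Rmult_le_pos.
rewrite Rmult_assoc; apply: Rmult_le_compat_l => //.
Qed.

Lemma Uit_vstar (S A : finType) r (p : S -> S -> A -> R) gamma (pi : nat -> policy S A)
  (hp : stochastic p) (hg0 : 0 <= gamma) vstar (hv : optimal_value r p gamma vstar) j :
  forall s, Uit r p gamma pi j vstar s <= vstar s.
Proof.
elim: j => [|j IH] s /=; first lra.
have := hv.1 (pi j.+1) s.
have := Tpol_sub r p gamma (pi j.+1) vstar (Uit r p gamma pi j vstar) s.
have : 0 <= Pmat p (pi j.+1) (fun x => vstar x - Uit r p gamma pi j vstar x) s.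
  by apply: Pmat_lb => // x; have := IH x; lra.
nra.
Qed.

Lemma avi_bound (S A : finType)
  (r : S -> A -> R) (p : S -> S -> A -> R) (gamma : R)
  (hp : stochastic p) (hg0 : 0 <= gamma) (hg1 : gamma < 1)
  (vstar : S -> R) (hvstar : optimal_value r p gamma vstar)
  (k : nat)
  (v : nat -> S -> R) (pi : nat -> policy S A) (eps : nat -> S -> R)
  (hgreedy : forall j : nat, (j < k)%N -> greedy r p gamma (pi j.+1) (v j))
  (hstep : forall j : nat, (j.+1 < k)%N ->
     v j.+1 = (fun s => Tpol r p gamma (pi j.+1) (v j) s + eps j.+1 s))
  (s0 : S) (epsb : R)
  (hepsb : forall j, (1 <= j < k)%N -> span (eps j) <= epsb) :
  forall j, (j < k)%N -> exists al be,
    (forall s, vstar s - v j s <= al) /\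
    (forall s, v j s - Uit r p gamma pi j vstar s <= be) /\
    al + be <= gamma ^ j * span (fun s => vstar s - v 0%N s)
               + epsb * ((1 - gamma ^ j) / (1 - gamma)).
Proof.
elim => [|j IH] Hj.
  have [t1 Ht1] := argmax_ex (fun s => vstar s - v 0%N s) s0.
  have [t2 Ht2] := argmax_ex (fun s => v 0%N s - vstar s) s0.
  exists (vstar t1 - v 0%N t1), (v 0%N t2 - vstar t2); split; [|split].
  - exact: Ht1.
  - exact: Ht2.
  - have := span_ge (fun s => vstar s - v 0%N s) t1 t2.
    have -> : epsb * ((1 - gamma ^ 0) / (1 - gamma)) = 0 by simpl; field; lra.
    simpl; lra.
have Hj' : (j < k)%N by apply: ltn_trans Hj.
have [al [be [Hal [Hbe Hab]]]] := IH Hj'.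
have [thi Hhi] := argmax_ex (eps j.+1) s0.
have [tlo Hlo] := argmax_ex (fun s => - eps j.+1 s) s0.
have Hsp : eps j.+1 thi - eps j.+1 tlo <= epsb.
  apply: Rle_trans (span_ge _ thi tlo) (hepsb _ _).
  by rewrite Hj andbT.
have Hv := hstep j Hj.
exists (gamma * al - eps j.+1 tlo), (gamma * be + eps j.+1 thi); split; [|split].
- move=> s; rewrite Hv.
  have [pis Hpis] := hvstar.2 s.
  have Hg := hgreedy j Hj' pis s.
  have Hd := Tpol_sub r p gamma pis vstar (v j) s.
  have HP : Pmat p pis (fun x => vstar x - v j x) s <= al by apply: Pmat_ub.
  have := Hlo s.
  have : gamma * Pmat p pis (fun x => vstar x - v j x) s <= gamma * al
    by apply: Rmult_le_compat_l.
  lra.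
- move=> s; rewrite Hv /=.
  have Hd := Tpol_sub r p gamma (pi j.+1) (v j) (Uit r p gamma pi j vstar) s.
  have HP : Pmat p (pi j.+1) (fun x => v j x - Uit r p gamma pi j vstar x) s <= be
    by apply: Pmat_ub.
  have := Hhi s.
  have : gamma * Pmat p (pi j.+1) (fun x => v j x - Uit r p gamma pi j vstar x) s
         <= gamma * be by apply: Rmult_le_compat_l.
  lra.
- have E : gamma ^ j.+1 * span (fun s => vstar s - v 0%N s)
           + epsb * ((1 - gamma ^ j.+1) / (1 - gamma))
         = gamma * (gamma ^ j * span (fun s => vstar s - v 0%N s)
           + epsb * ((1 - gamma ^ j) / (1 - gamma))) + epsb.
    simpl; field; lra.
  rewrite E.
  have : gamma * (al + be) <= gamma * (gamma ^ j * span (fun s => vstar s - v 0%N s)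
           + epsb * ((1 - gamma ^ j) / (1 - gamma))) by apply: Rmult_le_compat_l.
  lra.
Qed.

Lemma my_div_le0 a b : 0 <= a -> 0 < b -> 0 <= a / b.
Proof. move=> Ha Hb; rewrite /Rdiv; apply: Rmult_le_pos => //; left; exact: Rinv_0_lt_compat. Qed.

Unset Implicit Arguments.

Theorem mainTheorem4 (S A : finType)
  (r : S -> A -> R) (p : S -> S -> A -> R) (gamma : R)
  (hp : stochastic p) (hg0 : 0 <= gamma) (hg1 : gamma < 1)
  (vstar : S -> R) (hvstar : optimal_value r p gamma vstar)
  (k : nat) (hk : (1 <= k)%N)
  (v : nat -> S -> R) (pi : nat -> policy S A) (eps : nat -> S -> R)
  (hgreedy : forall j : nat, (j < k)%N -> greedy r p gamma (pi j.+1) (v j))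
  (hstep : forall j : nat, (j.+1 < k)%N ->
     v j.+1 = (fun s => Tpol r p gamma (pi j.+1) (v j) s + eps j.+1 s))
  (w : S -> R) (hw : nonstat_value r p gamma (periodic_policy pi k) w) :
  supnorm (fun s => vstar s - w s) <=
    (gamma / (1 - gamma) - gamma ^ k / (1 - gamma ^ k)) * max_err_span eps k
    + gamma ^ k / (1 - gamma ^ k) * span (fun s => vstar s - v 0%N s).
Proof.
case: k hk hgreedy hstep hw => [//|k'] _ hgreedy hstep hw.
set D := span (fun s => vstar s - v 0%N s).
set e := max_err_span eps k'.+1.
have HD : 0 <= D by apply: span_ge0.
have He : 0 <= e by apply: bigRmax_ge0.
have Hepsb : forall j, (1 <= j < k'.+1)%N -> span (eps j) <= e.
  move=> j Hj; apply: bigRmax_ge; by rewrite mem_index_iota.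
have [Hgk0 Hgk1] : 0 <= gamma ^ k'.+1 < 1 by apply: pow_lt_1_compat; [lra|lia].
have Hgk' : 0 <= gamma ^ k' <= 1.
  case: k' {hgreedy hstep hw Hepsb e He Hgk0 Hgk1} => [|k'']; first by simpl; lra.
  have := pow_lt_1_compat gamma k''.+1 (conj hg0 hg1) ltac:(lia); lra.
have Hgk : gamma ^ k'.+1 <= gamma.
  have -> : gamma ^ k'.+1 = gamma * gamma ^ k' by [].
  nra.
set M := gamma ^ k'.+1 * D + e * ((gamma - gamma ^ k'.+1) / (1 - gamma)).
set Bm := M / (1 - gamma ^ k'.+1).
have HM : 0 <= M.
  rewrite /M; apply: Rplus_le_le_0_compat; first by apply: Rmult_le_pos.
  apply: Rmult_le_pos => //; apply: my_div_le0; lra.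
have HBm : 0 <= Bm by apply: my_div_le0; lra.
have EB : (gamma / (1 - gamma) - gamma ^ k'.+1 / (1 - gamma ^ k'.+1)) * e
    + gamma ^ k'.+1 / (1 - gamma ^ k'.+1) * D = Bm.
  rewrite /Bm /M; field; lra.
rewrite EB; apply: bigRmax_le => // s.
have StepA : forall x, 0 <= vstar x - Uit r p gamma pi k'.+1 vstar x <= M.
  have [al [be [Hal [Hbe Hab]]]] :=
    avi_bound hp hg0 hg1 hvstar hgreedy hstep s Hepsb (ltnSn k').
  move=> x; split.
    have := Uit_vstar pi hp hg0 hvstar k'.+1 x; lra.
  have [pis Hpis] := hvstar.2 x.
  have Hg := hgreedy k' (ltnSn k') pis x.
  have Hd1 := Tpol_sub r p gamma pis vstar (v k') x.
  have Hd2 := Tpol_sub r p gamma (pi k'.+1) (v k') (Uit r p gamma pi k' vstar) x.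
  have HP1 : Pmat p pis (fun y => vstar y - v k' y) x <= al by apply: Pmat_ub.
  have HP2 : Pmat p (pi k'.+1) (fun y => v k' y - Uit r p gamma pi k' vstar y) x <= be
    by apply: Pmat_ub.
  have E : M = gamma * (gamma ^ k' * D + e * ((1 - gamma ^ k') / (1 - gamma))).
    rewrite /M; simpl; field; lra.
  have : gamma * (al + be) <= gamma * (gamma ^ k' * D + e * ((1 - gamma ^ k') / (1 - gamma)))
    by apply: Rmult_le_compat_l.
  have : gamma * Pmat p pis (fun y => vstar y - v k' y) x <= gamma * al
    by apply: Rmult_le_compat_l.
  have : gamma * Pmat p (pi k'.+1) (fun y => v k' y - Uit r p gamma pi k' vstar y) x
         <= gamma * be by apply: Rmult_le_compat_l.
  rewrite E /=; lra.
set sig := periodic_policy pi k'.+1.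
have StepB : forall n x, 0 <= vstar x - Tcomp r p gamma sig (n * k'.+1) vstar x <= Bm.
  elim => [|n IH] x.
    rewrite mul0n /=; lra.
  rewrite mulSn Tcomp_add /sig periodic_shift Tcomp_periodic.
  set g := Tcomp r p gamma (periodic_policy pi k'.+1) (n * k'.+1) vstar.
  have := Uit_mono r pi hp hg0 k'.+1 (f:=vstar) (g:=g) (c:=Bm) IH x.
  have := StepA x.
  have EB2 : M + gamma ^ k'.+1 * Bm = Bm by rewrite /Bm; field; lra.
  lra.
apply: Rle_plus_epsilon => del Hdel.
set K := supnorm vstar.
have HK : forall x, Rabs (vstar x) <= K.
  move=> x; exact: (bigRmax_ge (fun x => Rabs (vstar x)) 0 (mem_index_enum x)).
have HK0 : 0 <= K by apply: bigRmax_ge0.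
have [N1 HN1] := hw s (del / 2) ltac:(lra).
have [N2 HN2] := pow_lt_1_zero gamma ltac:(rewrite Rabs_right; lra)
                   (del / (2 * (K + 1))) ltac:(apply: Rdiv_lt_0_compat; lra).
set N' := (N1 + N2 + (N1 + N2).+1 * k')%N.
have eN : ((N1 + N2).+1 * k'.+1)%N = N'.+1 by rewrite /N' mulnS addSn.
have HB := StepB (N1 + N2).+1 s.
rewrite eN Tcomp_series in HB.
have H1 := HN1 N' ltac:(rewrite /N'; lia).
have H2 := HN2 N'.+1 ltac:(rewrite /N'; lia).
have H3 := compP_bound hp N'.+1 HK sig s.
rewrite /R_dist in H1.
set a := sum_f_R0 _ N' in HB H1.
set c := compP p sig N'.+1 vstar s in HB H3.
have Hb : Rabs (gamma ^ N'.+1 * c) <= del / 2.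
  rewrite Rabs_mult.
  have : Rabs (gamma ^ N'.+1) * Rabs c <= del / (2 * (K + 1)) * K.
    apply: Rmult_le_compat => //; try apply: Rabs_pos; lra.
  have : del / (2 * (K + 1)) * K <= del / 2.
    apply: (Rmult_le_reg_r (2 * (K + 1))); first lra.
    field_simplify; nra.
  lra.
move/abs_between: Hb => Hb.
have Ha : - (del/2) <= a - w s <= del / 2 by split_Rabs; lra.
apply: Rabs_le; lra.
Qed.
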